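(* In the instance constructed below, if there are $k$ distinct elements (distinct indices) $a_1,\dots,a_k$ of the multiset $\mathcal A$ and an index $m\in\{1,\dots,k-1\}$ with $\sum_{j=1}^m a_j=\sum_{j=m+1}^k a_j$, then the $2k$ rectangles $R_{a_1},R'_{a_1},\dots,R_{a_k},R'_{a_k}$ can all be packed feasibly into $K$ without rotating any of them. Moreover, every feasible packing of this instance (with or without rotations) contains at most $2k$ rectangles, so in this case $|\mathrm{OPT}|=2k$ both for 2DK and for 2DKR.
   Context: Let $k\ge 9$ be an odd integer and $\mathcal A$ a multiset of $n$ positive integers; let $M=\max_{a\in\mathcal A}a$ and $N=2Mk^4$, $K=[0,N]\times[0,N]$. For each element $a$ of $\mathcal A$ (counted with multiplicity) create two items (rectangles) $R_a$ with width $w(R_a)=N/k+a$ and height $h(R_a)=N/2-a$, and $R'_a$ with width $w(R'_a)=N/k-a$ and height $h(R'_a)=N/2+a$, each of profit $1$. A feasible packing places a subset of the items as pairwise disjoint open axis-parallel rectangles inside $K$; in 2DK the items keep their given orientation, in 2DKR each may be rotated by $90^\circ$. $\mathrm{OPT}$ denotes a maximum-cardinality feasible packing. *)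

(* Defs.v *)
From Stdlib Require Import Reals Lra Lia List Permutation Arith.
Import ListNotations.
Open Scope R_scope.

(* The multiset A is a list of naturals (indices 0..n-1 = positions in the list). *)

Definition Mmax (A : list nat) : nat := list_max A.
Definition Nsize (A : list nat) (k : nat) : R := 2 * INR (Mmax A) * INR k ^ 4.

(* An item is identified by (index i of an element of A, primed?):
   (i,false) is R_{a_i}, (i,true) is R'_{a_i}. *)
Definition item := (nat * bool)%type.

Definition item_w (A : list nat) (k : nat) (it : item) : R :=
  let a := INR (nth (fst it) A 0%nat) in
  if snd it then Nsize A k / INR k - a else Nsize A k / INR k + a.

Definition item_h (A : list nat) (k : nat) (it : item) : R :=
  let a := INR (nth (fst it) A 0%nat) in
  if snd it then Nsize A k / 2 + a else Nsize A k / 2 - a.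

Record placement := mkPlacement {
  pl_item : item;
  pl_rot : bool;
  pl_x : R;
  pl_y : R }.

Definition pw A k (p : placement) : R :=
  if pl_rot p then item_h A k (pl_item p) else item_w A k (pl_item p).
Definition ph A k (p : placement) : R :=
  if pl_rot p then item_w A k (pl_item p) else item_h A k (pl_item p).

Definition inside_K A k (p : placement) : Prop :=
  0 <= pl_x p /\ pl_x p + pw A k p <= Nsize A k /\
  0 <= pl_y p /\ pl_y p + ph A k p <= Nsize A k.

(* the open rectangles (x,x+w) x (y,y+h) of p and q are disjoint
   (all item sides are positive in the instance) *)
Definition disjoint_open A k (p q : placement) : Prop :=
  pl_x p + pw A k p <= pl_x q \/ pl_x q + pw A k q <= pl_x p \/
  pl_y p + ph A k p <= pl_y q \/ pl_y q + ph A k q <= pl_y p.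

Definition dummy_pl : placement := mkPlacement (0%nat, false) false 0 0.

(* Feasible packing of a subset of the items; [allow_rot = false] is 2DK,
   [allow_rot = true] is 2DKR. *)
Definition feasible (allow_rot : bool) (A : list nat) (k : nat)
    (P : list placement) : Prop :=
  (forall p, In p P ->
     (fst (pl_item p) < length A)%nat /\
     (allow_rot = false -> pl_rot p = false) /\
     inside_K A k p) /\
  NoDup (map pl_item P) /\
  (forall i j, (i < length P)%nat -> (j < length P)%nat -> i <> j ->
     disjoint_open A k (nth i P dummy_pl) (nth j P dummy_pl)).

Definition list_sum_nat (l : list nat) : nat := fold_right Nat.add 0%nat l.

(* Main.v *)
Require Import Defs.
From Stdlib Require Import Reals Lra Lia List Permutation Arith FunctionalExtensionality.
Import ListNotations.
Open Scope R_scope.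

Fixpoint rsf {T} (L : list T) (P : T -> bool) (w : T -> R) : R :=
  match L with [] => 0 | x :: L' => (if P x then w x else 0) + rsf L' P w end.

Lemma rsf_nonneg {T} (L : list T) P w :
  (forall l, In l L -> 0 <= w l) -> 0 <= rsf L P w.
Proof.
  induction L as [|x L IH]; simpl; intros H; [lra|].
  assert (0 <= w x) by auto. assert (0 <= rsf L P w) by auto.
  destruct (P x); lra.
Qed.

Lemma rsf_mono_w {T} (L : list T) P w w' :
  (forall l, In l L -> P l = true -> w l <= w' l) -> rsf L P w <= rsf L P w'.
Proof.
  induction L as [|x L IH]; simpl; intros H; [lra|].
  assert (rsf L P w <= rsf L P w') by auto.
  destruct (P x) eqn:E; [assert (w x <= w' x) by auto|]; lra.
Qed.

Lemma rsf_mono_P {T} (L : list T) P Q w :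
  (forall l, In l L -> P l = true -> Q l = true) ->
  (forall l, In l L -> 0 <= w l) -> rsf L P w <= rsf L Q w.
Proof.
  induction L as [|x L IH]; simpl; intros H H0; [lra|].
  assert (rsf L P w <= rsf L Q w) by auto.
  assert (0 <= w x) by auto.
  destruct (P x) eqn:E.
  - rewrite (H x (or_introl eq_refl) E). lra.
  - destruct (Q x); lra.
Qed.

Lemma rsf_strict {T} (L : list T) P Q w i :
  NoDup L -> In i L -> P i = false -> Q i = true ->
  (forall l, In l L -> P l = true -> Q l = true) ->
  (forall l, In l L -> 0 <= w l) -> rsf L P w + w i <= rsf L Q w.
Proof.
  induction L as [|x L IH]; simpl; intros ND Hi HP HQ H H0; [contradiction|].
  inversion ND; subst.
  destruct Hi as [<-|Hi].
  - rewrite HP, HQ.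
    assert (rsf L P w <= rsf L Q w) by (apply rsf_mono_P; auto). lra.
  - assert (rsf L P w + w i <= rsf L Q w) by (apply IH; auto).
    assert (0 <= w x) by auto.
    destruct (P x) eqn:E.
    + rewrite (H x (or_introl eq_refl) E). lra.
    + destruct (Q x); lra.
Qed.

Lemma rsf_add {T} (L : list T) P w v :
  rsf L P (fun l => w l + v l) = rsf L P w + rsf L P v.
Proof. induction L; simpl; [lra|]. rewrite IHL. destruct (P a); lra. Qed.

Lemma rsf_sub {T} (L : list T) P w v :
  rsf L P (fun l => w l - v l) = rsf L P w - rsf L P v.
Proof. induction L; simpl; [lra|]. rewrite IHL. destruct (P a); lra. Qed.

Lemma rsf_scale {T} (L : list T) P c w :
  rsf L P (fun l => c * w l) = c * rsf L P w.
Proof. induction L; simpl; [lra|]. rewrite IHL. destruct (P a); lra. Qed.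

Lemma rsf_const {T} (L : list T) c :
  rsf L (fun _ => true) (fun _ => c) = INR (length L) * c.
Proof. induction L; simpl length; [simpl; lra|]. rewrite S_INR. simpl. rewrite IHL. lra. Qed.

Lemma rsf_app {T} (L1 L2 : list T) P w :
  rsf (L1 ++ L2) P w = rsf L1 P w + rsf L2 P w.
Proof. induction L1; simpl; [lra|]. rewrite IHL1. lra. Qed.

Lemma rsf_filter {T} (L : list T) P w :
  rsf L P w = rsf (filter P L) (fun _ => true) w.
Proof. induction L; simpl; [lra|]. destruct (P a); simpl; rewrite IHL; lra. Qed.

Lemma rsf_split {T} (L : list T) b w :
  rsf L (fun _ => true) w =
  rsf (filter b L) (fun _ => true) w + rsf (filter (fun q => negb (b q)) L) (fun _ => true) w.
Proof. induction L; simpl; [lra|]. destruct (b a); simpl; rewrite IHL; lra. Qed.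

Lemma rsf_true_if {T} (L : list T) (P : T -> bool) (g : T -> R) :
  rsf L (fun _ => true) (fun j => if P j then g j else 0) = rsf L P g.
Proof. induction L; simpl; [lra|]. rewrite IHL. destruct (P a); lra. Qed.

Lemma rsf_exchange {T U} (L1 : list T) (L2 : list U) (F : T -> U -> R) :
  rsf L1 (fun _ => true) (fun j => rsf L2 (fun _ => true) (fun p => F j p)) =
  rsf L2 (fun _ => true) (fun p => rsf L1 (fun _ => true) (fun j => F j p)).
Proof.
  induction L1; simpl.
  - induction L2; simpl; lra.
  - rewrite IHL1. rewrite <- rsf_add. reflexivity.
Qed.

Lemma rsf_le_const {T} (L : list T) w c :
  (forall l, In l L -> w l <= c) -> rsf L (fun _ => true) w <= INR (length L) * c.
Proof.
  intros H. rewrite <- rsf_const. apply rsf_mono_w. auto.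
Qed.

Lemma rsf_INR (L : list nat) g :
  rsf L (fun _ => true) (fun l => INR (g l)) = INR (list_sum_nat (map g L)).
Proof. induction L; simpl; [lra|]. rewrite IHL, plus_INR. lra. Qed.

Lemma FOP_filter {T} (Rl : T -> T -> Prop) b (l : list T) :
  ForallOrdPairs Rl l -> ForallOrdPairs Rl (filter b l).
Proof.
  induction 1; simpl; [constructor|].
  destruct (b a); auto. constructor; auto.
  rewrite Forall_forall in *. intros x Hx. apply filter_In in Hx. apply H; tauto.
Qed.

Lemma FOP_impl_in {T} (Rl Rl' : T -> T -> Prop) (l : list T) :
  (forall x y, In x l -> In y l -> Rl x y -> Rl' x y) ->
  ForallOrdPairs Rl l -> ForallOrdPairs Rl' l.
Proof.
  intros H F. induction F; constructor.
  - rewrite Forall_forall in *. intros y Hy. apply H; simpl; auto.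
  - apply IHF. intros x y Hx Hy. apply H; simpl; auto.
Qed.

Lemma FOP_of_nth {T} (Rl : T -> T -> Prop) (l : list T) d :
  (forall i j, (i < length l)%nat -> (j < length l)%nat -> i <> j ->
     Rl (nth i l d) (nth j l d)) -> ForallOrdPairs Rl l.
Proof.
  induction l as [|x l IH]; intros H; constructor.
  - rewrite Forall_forall. intros y Hy.
    destruct (In_nth l y d Hy) as [j [Hj <-]].
    apply (H 0%nat (S j)); simpl; lia.
  - apply IH. intros i j Hi Hj Hij. apply (H (S i) (S j)); simpl; lia.
Qed.

Lemma oneD {T} (X W : T -> R) : forall n (l : list T) lo hi,
  (length l <= n)%nat -> lo <= hi ->
  (forall p, In p l -> lo <= X p /\ X p + W p <= hi) ->
  ForallOrdPairs (fun p q => X p + W p <= X q \/ X q + W q <= X p) l ->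
  rsf l (fun _ => true) W <= hi - lo.
Proof.
  induction n as [|n IH]; intros l lo hi Hn Hlh Hin F.
  - destruct l; simpl in *; [lra|lia].
  - destruct l as [|x l]; simpl; [lra|].
    inversion F as [|? ? Fx Fl]; subst.
    set (b := fun q => if Rle_dec (X q + W q) (X x) then true else false).
    rewrite (rsf_split l b W).
    assert (Hx := Hin x (or_introl eq_refl)).
    assert (H1 : rsf (filter b l) (fun _ => true) W <= X x - lo).
    { apply IH.
      - pose proof (filter_length_le b l). simpl in Hn. lia.
      - lra.
      - intros p Hp. apply filter_In in Hp as [Hp Hb].
        unfold b in Hb. destruct (Rle_dec _ _); [|discriminate].
        split; [apply Hin; simpl; auto | lra].
      - apply FOP_filter; auto. }
    assert (H2 : rsf (filter (fun q => negb (b q)) l) (fun _ => true) W <= hi - (X x + W x)).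
    { apply IH.
      - pose proof (filter_length_le (fun q => negb (b q)) l). simpl in Hn. lia.
      - lra.
      - intros p Hp. apply filter_In in Hp as [Hp Hb].
        unfold b in Hb. destruct (Rle_dec _ _) as [|Hn']; [discriminate|].
        rewrite Forall_forall in Fx. specialize (Fx p Hp).
        assert (Hp2 := Hin p (or_intror Hp)). lra.
      - apply FOP_filter; auto. }
    lra.
Qed.

Definition crossb (y z t : R) : bool :=
  (if Rlt_dec y t then true else false) && (if Rlt_dec t z then true else false).

Definition cnt (T : nat) (M y z : R) : R :=
  rsf (seq 0 (S T)) (fun j => crossb y z (INR j * M)) (fun _ => 1).

Lemma count_lb M : 0 < M -> forall T y z, 0 <= y -> z <= INR T * M ->
  z - y - M <= M * cnt T M y z.
Proof.
  intros HM T. induction T as [|T IH]; intros y z Hy Hz.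
  - unfold cnt. assert (0 <= rsf (seq 0 1) (fun j => crossb y z (INR j * M)) (fun _ => 1))
      by (apply rsf_nonneg; intros; lra).
    simpl INR in Hz. nra.
  - assert (Hc0 : 0 <= cnt T M y z) by (apply rsf_nonneg; intros; lra).
    assert (Hmono : cnt T M y z <= cnt (S T) M y z).
    { unfold cnt. rewrite (seq_S (S T) 0), rsf_app. simpl (rsf [_] _ _).
      destruct (crossb _ _ _); lra. }
    rewrite S_INR in Hz.
    destruct (Rle_dec z (INR T * M)) as [Hz'|Hz'].
    + specialize (IH y z Hy Hz'). nra.
    + destruct (Rlt_dec y (INR T * M)) as [Hy'|Hy'].
      * assert (IH' := IH y (INR T * M) Hy (Rle_refl _)).
        assert (cnt T M y (INR T * M) + 1 <= cnt T M y z).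
        { unfold cnt. apply (rsf_strict _ _ _ (fun _ => 1) T).
          - apply seq_NoDup.
          - apply in_seq. lia.
          - unfold crossb. destruct (Rlt_dec (INR T * M) (INR T * M)); [lra|].
            now rewrite Bool.andb_false_r.
          - unfold crossb. destruct (Rlt_dec y (INR T * M)); [|lra].
            destruct (Rlt_dec (INR T * M) z); [reflexivity|lra].
          - intros l _. unfold crossb.
            destruct (Rlt_dec y (INR l * M)); [|discriminate].
            destruct (Rlt_dec (INR l * M) (INR T * M)); [|discriminate].
            destruct (Rlt_dec (INR l * M) z); [reflexivity|lra].
          - intros; lra. }
        nra.
      * nra.
Qed.

Lemma nth_le_max (A : list nat) i : (i < length A)%nat -> (nth i A 0%nat <= Mmax A)%nat.
Proof.
  intros H. unfold Mmax. assert (Hf := proj1 (list_max_le A (list_max A)) (le_n _)).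
  rewrite Forall_forall in Hf. apply Hf. apply nth_In. auto.
Qed.

Lemma item_facts A k it :
  (9 <= k)%nat -> Forall (fun a => (0 < a)%nat) A -> (fst it < length A)%nat ->
  let N := Nsize A k in let Mr := INR (Mmax A) in
  0 < item_w A k it /\ 0 < item_h A k it /\
  item_w A k it <= N / 2 + Mr /\ item_h A k it <= N / 2 + Mr /\
  N / INR k * N / 2 - Mr * N / 2 - Mr ^ 2 <= item_w A k it * item_h A k it.
Proof.
  intros Hk HA Hi N Mr.
  assert (HK : 9 <= INR k) by (replace 9 with (INR 9) by (simpl; lra); apply le_INR; auto).
  set (a := INR (nth (fst it) A 0%nat)).
  assert (Ha0 : 0 <= a) by apply pos_INR.
  assert (HaM : a <= Mr) by (apply le_INR; apply nth_le_max; auto).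
  assert (HM1 : 0 < Mr).
  { apply lt_0_INR. assert (Hin := nth_In A 0%nat Hi).
    rewrite Forall_forall in HA. specialize (HA _ Hin).
    pose proof (nth_le_max A _ Hi). lia. }
  assert (Hu : N / INR k = 2 * Mr * INR k ^ 3).
  { unfold N, Nsize, Mr. field. lra. }
  assert (HN : N = 2 * Mr * INR k ^ 4) by (unfold N, Nsize, Mr; ring).
  assert (Hk3 : 729 <= INR k ^ 3) by (simpl; nra).
  assert (Hk4 : INR k ^ 4 = INR k * INR k ^ 3) by (simpl; ring).
  assert (HMk : 0 < Mr * INR k ^ 3) by (apply Rmult_lt_0_compat; lra).
  assert (HuN : N / INR k <= N / 2) by (rewrite Hu, HN, Hk4; nra).
  assert (Hum : 2 * Mr <= N / INR k) by (rewrite Hu; nra).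
  assert (HN0 : 0 <= N) by (rewrite HN; nra).
  unfold item_w, item_h. fold a. fold N.
  set (u := N / INR k) in *.
  assert (0 <= a * u) by nra. assert (a * N <= Mr * N) by nra.
  assert (a * a <= Mr * Mr) by nra. assert (a * u <= a * (N/2)) by nra.
  destruct (snd it); repeat split; nra.
Qed.

Lemma poly_fact K : 9 <= K -> 4 * K^8 + 2 * K^4 < (2*K+1) * (2*K^7 - 2*K^4 - 2).
Proof.
  intros HK.
  assert (H2 : 81 <= K^2) by (simpl; nra).
  assert (H4 : 6561 <= K^4) by (replace (K^4) with (K^2*K^2) by ring; nra).
  assert (K^7 = K^2 * K^5) by ring.
  assert (K^5 = K * K^4) by ring.
  assert (0 < K^5) by nra.
  assert (81 * K^5 <= K^7) by nra.
  assert (K^5 = K * K^4) by ring.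
  assert (9 * K^4 <= K^5) by nra.
  assert (K^4 = K^2 * K^2) by ring.
  assert (9 * K <= K^2) by (simpl; nra).
  nra.
Qed.

Lemma part2 k A : (9 <= k)%nat -> Forall (fun a => (0 < a)%nat) A ->
  forall P, feasible true A k P -> (length P <= 2 * k)%nat.
Proof.
  intros Hk HA P [Hin [_ Hdisj]].
  destruct P as [|p0 P0] eqn:EP; [simpl; lia|].
  rewrite <- EP in *.
  set (N := Nsize A k). set (Mr := INR (Mmax A)).
  assert (HK : 9 <= INR k) by (replace 9 with (INR 9) by (simpl; lra); apply le_INR; auto).
  assert (HM1 : 0 < Mr).
  { assert (Hp0 : In p0 P) by (rewrite EP; simpl; auto).
    destruct (Hin p0 Hp0) as [Hi _].
    apply lt_0_INR. assert (Hin' := nth_In A 0%nat Hi).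
    rewrite Forall_forall in HA. specialize (HA _ Hin').
    pose proof (nth_le_max A _ Hi). lia. }
  set (T := (2 * k ^ 4)%nat).
  assert (HT : INR T * Mr = N).
  { unfold T, N, Nsize, Mr. rewrite mult_INR, pow_INR. simpl INR at 1. ring. }
  assert (Hp : forall p, In p P ->
    0 <= pl_x p /\ pl_x p + pw A k p <= N /\ 0 <= pl_y p /\ pl_y p + ph A k p <= N /\
    0 <= pw A k p /\ pw A k p <= N / 2 + Mr /\
    N / INR k * N / 2 - Mr * N / 2 - Mr ^ 2 <= pw A k p * ph A k p).
  { intros p Hpp. destruct (Hin p Hpp) as [Hi [_ [H1 [H2 [H3 H4]]]]].
    destruct (item_facts A k (pl_item p) Hk HA Hi) as [F1 [F2 [F3 [F4 F5]]]].
    unfold pw, ph in *. unfold inside_K, pw, ph in H2, H4. fold N in H2, H4, F3, F4, F5. fold Mr in F3, F4, F5.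
    destruct (pl_rot p); repeat split; try lra.
    all: rewrite Rmult_comm; lra. }
  assert (FOP : ForallOrdPairs (disjoint_open A k) P) by (apply (FOP_of_nth _ _ dummy_pl); auto).
  set (cr := fun (t : R) (p : placement) => crossb (pl_y p) (pl_y p + ph A k p) t).
  assert (Hline : forall t, rsf P (cr t) (pw A k) <= N).
  { intros t. rewrite rsf_filter.
    replace N with (N - 0) by ring.
    apply (oneD pl_x (pw A k) (length (filter (cr t) P))); [lia| |  |].
    - destruct (Hp p0); [rewrite EP; simpl; auto|]. lra.
    - intros p Hpp. apply filter_In in Hpp as [Hpp _]. destruct (Hp p Hpp); lra.
    - apply (FOP_impl_in (disjoint_open A k)); [|apply FOP_filter; auto].
      intros x y Hx Hy Hd. apply filter_In in Hx as [_ Hx]. apply filter_In in Hy as [_ Hy].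
      unfold cr, crossb in Hx, Hy.
      destruct (Rlt_dec (pl_y x) t); [|discriminate].
      destruct (Rlt_dec t (pl_y x + ph A k x)); [|discriminate].
      destruct (Rlt_dec (pl_y y) t); [|discriminate].
      destruct (Rlt_dec t (pl_y y + ph A k y)); [|discriminate].
      unfold disjoint_open in Hd. lra. }
  set (J := seq 0 (S T)).
  set (F := fun (j : nat) (p : placement) => if cr (INR j * Mr) p then pw A k p else 0).
  assert (Hup : rsf J (fun _ => true) (fun j => rsf P (fun _ => true) (fun p => F j p))
                <= INR (length J) * N).
  { apply rsf_le_const. intros j _. unfold F. rewrite rsf_true_if. apply Hline. }
  rewrite rsf_exchange in Hup.
  assert (Hlow : INR (length P) * ((N / INR k * N / 2 - Mr * N / 2 - Mr ^ 2 - (N/2 + Mr) * Mr))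
       <= Mr * rsf P (fun _ => true) (fun p => rsf J (fun _ => true) (fun j => F j p))).
  { rewrite <- rsf_scale, <- rsf_const. apply rsf_mono_w. intros p Hpp _.
    unfold F. rewrite rsf_true_if.
    replace (rsf J _ (fun _ => pw A k p)) with (pw A k p * cnt T Mr (pl_y p) (pl_y p + ph A k p)).
    2:{ unfold cnt, J, cr. rewrite <- rsf_scale. apply f_equal.
        apply functional_extensionality; intros; ring. }
    destruct (Hp p Hpp) as [H1 [H2 [H3 [H4 [H5 [H6 H7]]]]]].
    assert (Hc := count_lb Mr HM1 T (pl_y p) (pl_y p + ph A k p) H3 ltac:(lra)).
    assert (pw A k p * (pl_y p + ph A k p - pl_y p - Mr) <= pw A k p * (Mr * cnt T Mr (pl_y p) (pl_y p + ph A k p))) by nra.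
    nra. }
  assert (HJ : length J = S T) by (unfold J; apply length_seq).
  rewrite HJ in Hup.
  assert (Hfin : INR (length P) * ((N / INR k * N / 2 - Mr * N / 2 - Mr ^ 2 - (N/2 + Mr) * Mr))
     <= Mr * (INR (S T) * N)) by nra.
  assert (HN : N = 2 * Mr * INR k ^ 4) by (unfold N, Nsize, Mr; ring).
  assert (HTr : INR T = 2 * INR k ^ 4) by (unfold T; rewrite mult_INR, pow_INR; simpl; ring).
  rewrite S_INR, HTr in Hfin.
  replace ((N / INR k * N / 2 - Mr * N / 2 - Mr ^ 2 - (N/2 + Mr) * Mr))
    with (Mr^2 * (2 * INR k^7 - 2 * INR k^4 - 2)) in Hfin
    by (rewrite HN; field; lra).
  replace (Mr * ((2 * INR k ^ 4 + 1) * N)) with (Mr^2 * (4 * INR k^8 + 2 * INR k^4)) in Hfin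
    by (rewrite HN; ring).
  assert (HM3 : 0 < Mr^2) by (apply pow_lt; lra).
  destruct (le_lt_dec (length P) (2 * k)) as [ok|bad]; auto.
  exfalso.
  assert (Hn : 2 * INR k + 1 <= INR (length P)).
  { replace (2 * INR k + 1) with (INR (S (2 * k))) by (rewrite S_INR, mult_INR; simpl; ring).
    apply le_INR. lia. }
  pose proof (poly_fact _ HK).
  assert (HX : 0 < 2 * INR k ^ 7 - 2 * INR k ^ 4 - 2) by nra.
  assert ((2 * INR k + 1) * (2 * INR k ^ 7 - 2 * INR k ^ 4 - 2) <= INR (length P) * (2 * INR k ^ 7 - 2 * INR k ^ 4 - 2)) by nra.
  assert (INR (length P) * (2 * INR k ^ 7 - 2 * INR k ^ 4 - 2) <= 4 * INR k ^ 8 + 2 * INR k ^ 4).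
  { apply (Rmult_le_reg_l (Mr^2)); auto. nra. }
  lra.
Qed.

Definition av (A : list nat) (f : nat -> nat) j := nth (f j) A 0%nat.
Definition aR A f j := INR (av A f j).
Definition uu A k := Nsize A k / INR k.
Definition ltL A f (l j : nat) : bool :=
  (Nat.ltb (av A f j) (av A f l)) || (Nat.eqb (av A f l) (av A f j) && Nat.ltb l j).
Definition ltR A f (l j : nat) : bool :=
  (Nat.ltb (av A f l) (av A f j)) || (Nat.eqb (av A f l) (av A f j) && Nat.ltb l j).

Lemma ltL_irr A f j : ltL A f j j = false.
Proof. unfold ltL. destruct (Nat.ltb_spec (av A f j) (av A f j)); [lia|].
  destruct (Nat.ltb_spec j j); [lia|]. now rewrite Bool.andb_false_r. Qed.
Lemma ltR_irr A f j : ltR A f j j = false.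
Proof. unfold ltR. destruct (Nat.ltb_spec (av A f j) (av A f j)); [lia|].
  destruct (Nat.ltb_spec j j); [lia|]. now rewrite Bool.andb_false_r. Qed.

Ltac lexs := unfold ltL, ltR in *;
  repeat match goal with
  | |- context [Nat.ltb ?x ?y] => destruct (Nat.ltb_spec x y)
  | |- context [Nat.eqb ?x ?y] => destruct (Nat.eqb_spec x y)
  | H : context [Nat.ltb ?x ?y] |- _ => destruct (Nat.ltb_spec x y)
  | H : context [Nat.eqb ?x ?y] |- _ => destruct (Nat.eqb_spec x y)
  end; simpl in *; try discriminate; try lia; try reflexivity.

Lemma ltL_trans A f i j l : ltL A f i j = true -> ltL A f j l = true -> ltL A f i l = true.
Proof. intros H1 H2. lexs. Qed.
Lemma ltR_trans A f i j l : ltR A f i j = true -> ltR A f j l = true -> ltR A f i l = true.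
Proof. intros H1 H2. lexs. Qed.
Lemma ltL_tot A f i j : i <> j -> ltL A f i j = true \/ ltL A f j i = true.
Proof. intros H. lexs; auto. Qed.
Lemma ltR_tot A f i j : i <> j -> ltR A f i j = true \/ ltR A f j i = true.
Proof. intros H. lexs; auto. Qed.
Lemma ltL_false A f i j : ltL A f j i = false -> aR A f j <= aR A f i.
Proof. intros H. unfold aR. apply le_INR. lexs. Qed.
Lemma ltR_false A f i j : ltR A f i j = false -> aR A f j <= aR A f i.
Proof. intros H. unfold aR. apply le_INR. lexs. Qed.

Definition L1 m := seq 0 m.
Definition L2 k m := seq m (k - m).
Definition wp A k f := fun l => uu A k + aR A f l.
Definition wm A k f := fun l => uu A k - aR A f l.
Definition BL A k f m j := rsf (L1 m) (fun l => ltL A f l j) (wp A k f).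
Definition TL A k f m j := rsf (L1 m) (fun l => ltL A f l j) (wm A k f).
Definition X0t A k f m := rsf (L1 m) (fun _ => true) (wm A k f).
Definition X0b A k f m := rsf (L1 m) (fun _ => true) (wp A k f).
Definition TR A k f m j := X0t A k f m + rsf (L2 k m) (fun l => ltR A f l j) (wp A k f).
Definition BR A k f m j := X0b A k f m + rsf (L2 k m) (fun l => ltR A f l j) (wm A k f).

Definition place A k f m (s : nat * bool) : placement :=
  let j := fst s in
  if Nat.ltb j m then
    (if snd s then mkPlacement (f j, true) false (TL A k f m j) (Nsize A k / 2 - aR A f j)
     else mkPlacement (f j, false) false (BL A k f m j) 0)
  else
    (if snd s then mkPlacement (f j, true) false (BR A k f m j) 0
     else mkPlacement (f j, false) false (TR A k f m j) (Nsize A k / 2 + aR A f j)).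

Lemma iw_f A k f j : item_w A k (f j, false) = wp A k f j. Proof. reflexivity. Qed.
Lemma iw_t A k f j : item_w A k (f j, true) = wm A k f j. Proof. reflexivity. Qed.
Lemma ih_f A k f j : item_h A k (f j, false) = Nsize A k / 2 - aR A f j. Proof. reflexivity. Qed.
Lemma ih_t A k f j : item_h A k (f j, true) = Nsize A k / 2 + aR A f j. Proof. reflexivity. Qed.

Lemma disj_sym A k p q : disjoint_open A k p q -> disjoint_open A k q p.
Proof. unfold disjoint_open. tauto. Qed.


Ltac pu := unfold place, disjoint_open, pw, ph; simpl fst; simpl snd;
      repeat match goal with |- context [Nat.ltb ?x ?y] => destruct (Nat.ltb_spec x y); try lia end;
      simpl pl_x; simpl pl_y; simpl pl_rot; simpl pl_item; cbv iota;
      rewrite ?iw_f, ?iw_t, ?ih_f, ?ih_t.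

Lemma geom A k f m :
  (forall j, (j < k)%nat -> 0 <= aR A f j <= uu A k) ->
  0 <= uu A k -> uu A k <= Nsize A k / 2 ->
  Nsize A k = INR k * uu A k -> (m <= k)%nat ->
  rsf (L1 m) (fun _ => true) (aR A f) = rsf (L2 k m) (fun _ => true) (aR A f) ->
  (forall s, (fst s < k)%nat -> inside_K A k (place A k f m s)) /\
  (forall s t, (fst s < k)%nat -> (fst t < k)%nat -> s <> t ->
     disjoint_open A k (place A k f m s) (place A k f m t)).
Proof.
  intros Ha Hu0 HuN HN Hmk HS.
  set (N := Nsize A k) in *. set (u := uu A k) in *.
  set (a := aR A f) in *.
  assert (In1 : forall l, In l (L1 m) -> (l < m)%nat) by (intros l Hl; unfold L1 in Hl; apply in_seq in Hl; lia).
  assert (In2 : forall l, In l (L2 k m) -> (m <= l < k)%nat) by (intros l Hl; unfold L2 in Hl; apply in_seq in Hl; lia).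
  assert (ND1 : NoDup (L1 m)) by apply seq_NoDup.
  assert (ND2 : NoDup (L2 k m)) by apply seq_NoDup.
  assert (wp0 : forall l, In l (L1 m) \/ In l (L2 k m) -> 0 <= wp A k f l).
  { intros l [Hl|Hl]; [apply In1 in Hl|apply In2 in Hl]; unfold wp; fold u a;
    destruct (Ha l ltac:(lia)); lra. }
  assert (wm0 : forall l, In l (L1 m) \/ In l (L2 k m) -> 0 <= wm A k f l).
  { intros l [Hl|Hl]; [apply In1 in Hl|apply In2 in Hl]; unfold wm; fold u a;
    destruct (Ha l ltac:(lia)); lra. }
  assert (a0 : forall l, In l (L1 m) \/ In l (L2 k m) -> 0 <= a l).
  { intros l [Hl|Hl]; [apply In1 in Hl|apply In2 in Hl];
    destruct (Ha l ltac:(lia)); lra. }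
  set (S := rsf (L1 m) (fun _ => true) a) in *.
  assert (HX0t : X0t A k f m = INR m * u - S).
  { unfold X0t, wm. fold u a. rewrite rsf_sub, rsf_const. unfold L1. rewrite length_seq. reflexivity. }
  assert (HX0b : X0b A k f m = INR m * u + S).
  { unfold X0b, wp. fold u a. rewrite rsf_add, rsf_const. unfold L1. rewrite length_seq. reflexivity. }
  assert (Hr2p : rsf (L2 k m) (fun _ => true) (wp A k f) = INR (k - m) * u + S).
  { unfold wp. fold u a. rewrite rsf_add, rsf_const, HS. unfold L2. rewrite length_seq. reflexivity. }
  assert (Hr2m : rsf (L2 k m) (fun _ => true) (wm A k f) = INR (k - m) * u - S).
  { unfold wm. fold u a. rewrite rsf_sub, rsf_const, HS. unfold L2. rewrite length_seq. reflexivity. }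
  assert (HNmk : N = INR m * u + INR (k - m) * u).
  { rewrite HN, minus_INR by auto. ring. }
  assert (HS0 : 0 <= S) by (apply rsf_nonneg; auto).
  assert (HSu : S <= INR (k - m) * u).
  { assert (E : rsf (L2 k m) (fun _ => true) (fun _ => u) = INR (k - m) * u)
      by (rewrite rsf_const; unfold L2; rewrite length_seq; auto).
    rewrite HS, <- E. apply rsf_mono_w. intros l Hl _.
    destruct (Ha l ltac:(apply In2 in Hl; lia)); lra. }
  assert (HSu1 : S <= INR m * u).
  { assert (E : rsf (L1 m) (fun _ => true) (fun _ => u) = INR m * u)
      by (rewrite rsf_const; unfold L1; rewrite length_seq; auto).
    unfold S. rewrite <- E. apply rsf_mono_w. intros l Hl _.
    destruct (Ha l ltac:(apply In1 in Hl; lia)); lra. }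
  assert (BLend : forall j, In j (L1 m) -> BL A k f m j + wp A k f j <= X0b A k f m).
  { intros j Hj. apply rsf_strict; auto. apply ltL_irr. }
  assert (TLend : forall j, In j (L1 m) -> TL A k f m j + wm A k f j <= X0t A k f m).
  { intros j Hj. apply rsf_strict; auto. apply ltL_irr. }
  assert (BLord : forall i j, In i (L1 m) -> ltL A f i j = true -> BL A k f m i + wp A k f i <= BL A k f m j).
  { intros i j Hi Hij. apply rsf_strict; auto. apply ltL_irr.
    intros l _ Hl. eapply ltL_trans; eauto. }
  assert (TLord : forall i j, In i (L1 m) -> ltL A f i j = true -> TL A k f m i + wm A k f i <= TL A k f m j).
  { intros i j Hi Hij. apply rsf_strict; auto. apply ltL_irr.
    intros l _ Hl. eapply ltL_trans; eauto. }
  assert (TLBL : forall i j, In i (L1 m) -> ltL A f i j = true -> TL A k f m i + wm A k f i <= BL A k f m j).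
  { intros i j Hi Hij. eapply Rle_trans; [|apply (BLord i j Hi Hij)].
    assert (TL A k f m i <= BL A k f m i).
    { apply rsf_mono_w. intros l Hl _. unfold wm, wp. assert (0 <= a l) by auto. fold u a. lra. }
    assert (0 <= a i) by auto. unfold wm, wp. fold u a. lra. }
  assert (BL0 : forall j, 0 <= BL A k f m j) by (intros; apply rsf_nonneg; auto).
  assert (TL0 : forall j, 0 <= TL A k f m j) by (intros; apply rsf_nonneg; auto).
  assert (TRend : forall j, In j (L2 k m) -> TR A k f m j + wp A k f j <= N).
  { intros j Hj. unfold TR.
    assert (rsf (L2 k m) (fun l => ltR A f l j) (wp A k f) + wp A k f j <= rsf (L2 k m) (fun _ => true) (wp A k f))
      by (apply rsf_strict; auto; apply ltR_irr).
    lra. }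
  assert (BRend : forall j, In j (L2 k m) -> BR A k f m j + wm A k f j <= N).
  { intros j Hj. unfold BR.
    assert (rsf (L2 k m) (fun l => ltR A f l j) (wm A k f) + wm A k f j <= rsf (L2 k m) (fun _ => true) (wm A k f))
      by (apply rsf_strict; auto; apply ltR_irr).
    lra. }
  assert (TRord : forall i j, In i (L2 k m) -> ltR A f i j = true -> TR A k f m i + wp A k f i <= TR A k f m j).
  { intros i j Hi Hij. unfold TR.
    assert (rsf (L2 k m) (fun l => ltR A f l i) (wp A k f) + wp A k f i <= rsf (L2 k m) (fun l => ltR A f l j) (wp A k f)).
    { apply rsf_strict; auto. apply ltR_irr. intros l _ Hl. eapply ltR_trans; eauto. }
    lra. }
  assert (BRord : forall i j, In i (L2 k m) -> ltR A f i j = true -> BR A k f m i + wm A k f i <= BR A k f m j).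
  { intros i j Hi Hij. unfold BR.
    assert (rsf (L2 k m) (fun l => ltR A f l i) (wm A k f) + wm A k f i <= rsf (L2 k m) (fun l => ltR A f l j) (wm A k f)).
    { apply rsf_strict; auto. apply ltR_irr. intros l _ Hl. eapply ltR_trans; eauto. }
    lra. }
  assert (TRBR : forall i j, In i (L2 k m) -> ltR A f i j = true -> TR A k f m i + wp A k f i <= BR A k f m j).
  { intros i j Hi Hij. eapply Rle_trans; [apply (TRord i j Hi Hij)|].
    unfold TR, BR. rewrite HX0t, HX0b.
    unfold wp, wm. fold u a. rewrite rsf_add, rsf_sub.
    assert (rsf (L2 k m) (fun l => ltR A f l j) a <= S).
    { rewrite HS. apply rsf_mono_P; auto. }
    lra. }
  assert (TRge : forall j, X0t A k f m <= TR A k f m j).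
  { intros j. unfold TR. assert (0 <= rsf (L2 k m) (fun l => ltR A f l j) (wp A k f)) by (apply rsf_nonneg; auto). lra. }
  assert (BRge : forall j, X0b A k f m <= BR A k f m j).
  { intros j. unfold BR. assert (0 <= rsf (L2 k m) (fun l => ltR A f l j) (wm A k f)) by (apply rsf_nonneg; auto). lra. }
  assert (Hwp : forall j, wp A k f j = u + a j) by reflexivity.
  assert (Hwm : forall j, wm A k f j = u - a j) by reflexivity.
  split.
  - intros [j b] Hj. simpl in Hj. unfold place, inside_K, pw, ph; simpl.
    destruct (Nat.ltb_spec j m); destruct b; simpl;
      rewrite ?iw_f, ?iw_t, ?ih_f, ?ih_t; fold N a;
      destruct (Ha j Hj); specialize (Hwp j); specialize (Hwm j).
    + assert (Hi : In j (L1 m)) by (apply in_seq; lia).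
      specialize (TLend j Hi). specialize (TL0 j). repeat split; lra.
    + assert (Hi : In j (L1 m)) by (apply in_seq; lia).
      specialize (BLend j Hi). specialize (BL0 j). repeat split; lra.
    + assert (Hi : In j (L2 k m)) by (apply in_seq; lia).
      specialize (BRend j Hi). specialize (BRge j). repeat split; lra.
    + assert (Hi : In j (L2 k m)) by (apply in_seq; lia).
      specialize (TRend j Hi). specialize (TRge j). repeat split; lra.
  - assert (I1 : forall j, (j < m)%nat -> In j (L1 m)) by (intros; apply in_seq; lia).
    assert (I2 : forall j, (m <= j < k)%nat -> In j (L2 k m)) by (intros; apply in_seq; lia).
    assert (D00 : forall i j, (i < m)%nat -> (j < m)%nat -> i <> j ->
      disjoint_open A k (place A k f m (i,false)) (place A k f m (j,false))).
    { intros i j Hi Hj Hij. pu; fold N a.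
      destruct (ltL_tot A f i j Hij) as [Ho|Ho].
      - left. apply BLord; auto.
      - right; left. apply BLord; auto. }
    assert (D11 : forall i j, (i < m)%nat -> (j < m)%nat -> i <> j ->
      disjoint_open A k (place A k f m (i,true)) (place A k f m (j,true))).
    { intros i j Hi Hj Hij. pu; fold N a.
      destruct (ltL_tot A f i j Hij) as [Ho|Ho].
      - left. apply TLord; auto.
      - right; left. apply TLord; auto. }
    assert (D22 : forall i j, (m <= i < k)%nat -> (m <= j < k)%nat -> i <> j ->
      disjoint_open A k (place A k f m (i,false)) (place A k f m (j,false))).
    { intros i j Hi Hj Hij. pu; fold N a.
      destruct (ltR_tot A f i j Hij) as [Ho|Ho].
      - left. apply TRord; auto.
      - right; left. apply TRord; auto. }
    assert (D33 : forall i j, (m <= i < k)%nat -> (m <= j < k)%nat -> i <> j ->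
      disjoint_open A k (place A k f m (i,true)) (place A k f m (j,true))).
    { intros i j Hi Hj Hij. pu; fold N a.
      destruct (ltR_tot A f i j Hij) as [Ho|Ho].
      - left. apply BRord; auto.
      - right; left. apply BRord; auto. }
    assert (D01 : forall i j, (i < m)%nat -> (j < m)%nat ->
      disjoint_open A k (place A k f m (i,false)) (place A k f m (j,true))).
    { intros i j Hi Hj. pu; fold N a.
      destruct (ltL A f j i) eqn:E.
      - right; left. apply TLBL; auto.
      - apply ltL_false in E. right; right; left. fold a in E. lra. }
    assert (D02 : forall i j, (i < m)%nat -> (m <= j < k)%nat ->
      disjoint_open A k (place A k f m (i,false)) (place A k f m (j,false))).
    { intros i j Hi Hj. pu; fold N a. destruct (Ha i ltac:(lia)). destruct (Ha j ltac:(lia)).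
      right; right; left. lra. }
    assert (D03 : forall i j, (i < m)%nat -> (m <= j < k)%nat ->
      disjoint_open A k (place A k f m (i,false)) (place A k f m (j,true))).
    { intros i j Hi Hj. pu; fold N a. left. specialize (BLend i (I1 i Hi)). specialize (BRge j). lra. }
    assert (D12 : forall i j, (i < m)%nat -> (m <= j < k)%nat ->
      disjoint_open A k (place A k f m (i,true)) (place A k f m (j,false))).
    { intros i j Hi Hj. pu; fold N a. left. specialize (TLend i (I1 i Hi)). specialize (TRge j). lra. }
    assert (D13 : forall i j, (i < m)%nat -> (m <= j < k)%nat ->
      disjoint_open A k (place A k f m (i,true)) (place A k f m (j,true))).
    { intros i j Hi Hj. pu; fold N a. left. specialize (TLend i (I1 i Hi)). specialize (BRge j). lra. }
    assert (D23 : forall i j, (m <= i < k)%nat -> (m <= j < k)%nat ->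
      disjoint_open A k (place A k f m (i,false)) (place A k f m (j,true))).
    { intros i j Hi Hj. pu; fold N a.
      destruct (ltR A f i j) eqn:E.
      - left. apply TRBR; auto.
      - apply ltR_false in E. fold a in E. right; right; right. lra. }
    intros [i bi] [j bj] Hi Hj Hst; simpl in Hi, Hj.
    assert (Hne : bi = bj -> i <> j) by (intros -> ->; auto).
    destruct (Nat.ltb_spec i m), (Nat.ltb_spec j m), bi, bj;
      try specialize (Hne eq_refl);
      first [ solve [apply D00; auto; lia] | solve [apply D11; auto; lia]
            | solve [apply D22; auto; lia] | solve [apply D33; auto; lia]
            | solve [apply D01; auto; lia] | solve [apply D02; auto; lia]
            | solve [apply D03; auto; lia] | solve [apply D12; auto; lia]
            | solve [apply D13; auto; lia] | solve [apply D23; auto; lia]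
            | apply disj_sym; first [ solve [apply D01; auto; lia] | solve [apply D02; auto; lia]
            | solve [apply D03; auto; lia] | solve [apply D12; auto; lia]
            | solve [apply D13; auto; lia] | solve [apply D23; auto; lia] ] ].
Qed.

Definition slots k := flat_map (fun j => [(j,false);(j,true)]) (seq 0 k).

Lemma in_slots k s : In s (slots k) -> (fst s < k)%nat.
Proof.
  unfold slots. intros H. apply in_flat_map in H as [j [Hj Hs]].
  apply in_seq in Hj. simpl in Hs. destruct Hs as [<-|[<-|[]]]; simpl; lia.
Qed.

Lemma item_place A k f m s : pl_item (place A k f m s) = (f (fst s), snd s).
Proof. destruct s as [j b]. unfold place. simpl. destruct (Nat.ltb j m), b; reflexivity. Qed.

Lemma map_item A k f m L :
  map pl_item (map (place A k f m) (flat_map (fun j => [(j,false);(j,true)]) L)) =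
  flat_map (fun j => [(f j, false); (f j, true)]) L.
Proof.
  induction L; simpl; auto. rewrite !item_place. simpl. f_equal. f_equal. auto.
Qed.

Lemma nodup_fm (g : nat -> nat) L :
  NoDup L -> (forall i j, In i L -> In j L -> g i = g j -> i = j) ->
  NoDup (flat_map (fun j => [(g j, false); (g j, true)]) L).
Proof.
  induction L as [|x L IH]; simpl; intros ND Hg; [constructor|].
  inversion ND; subst.
  assert (Hno : forall b, ~ In (g x, b) (flat_map (fun j => [(g j, false); (g j, true)]) L)).
  { intros b Hb. apply in_flat_map in Hb as [j [Hj Hb]].
    simpl in Hb. assert (g j = g x) by (destruct Hb as [E|[E|[]]]; inversion E; auto).
    assert (j = x) by (apply Hg; simpl; auto). subst. contradiction. }
  constructor.
  - simpl. intros [E|E]; [discriminate|]. eapply Hno; eauto.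
  - constructor; [apply Hno|]. apply IH; auto; intros; apply Hg; simpl; auto.
Qed.

Lemma part1 k A : (9 <= k)%nat -> Forall (fun a => (0 < a)%nat) A ->
  forall (f : nat -> nat) (m : nat),
      (forall j, (j < k)%nat -> (f j < length A)%nat) ->
      (forall i j, (i < k)%nat -> (j < k)%nat -> f i = f j -> i = j) ->
      (1 <= m <= k - 1)%nat ->
      (list_sum_nat (map (fun j => nth (f j) A 0) (seq 0 m)) =
       list_sum_nat (map (fun j => nth (f j) A 0) (seq m (k - m))))%nat ->
      exists P : list placement,
        feasible false A k P /\
        Permutation (map pl_item P)
          (flat_map (fun j => [(f j, false); (f j, true)]) (seq 0 k)).
Proof.
  intros Hk HA f m Hf Hinj Hm Hsum.
  assert (HK : 9 <= INR k) by (replace 9 with (INR 9) by (simpl; lra); apply le_INR; auto).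
  set (Mr := INR (Mmax A)).
  assert (HM1 : 0 < Mr).
  { assert (Hi := Hf 0%nat ltac:(lia)).
    apply lt_0_INR. assert (Hin' := nth_In A 0%nat Hi).
    rewrite Forall_forall in HA. specialize (HA _ Hin').
    pose proof (nth_le_max A _ Hi). lia. }
  assert (Hu : uu A k = 2 * Mr * INR k ^ 3) by (unfold uu, Nsize, Mr; field; lra).
  assert (Hk3 : 729 <= INR k ^ 3) by (simpl; nra).
  assert (HMk : 0 < Mr * INR k ^ 3) by (apply Rmult_lt_0_compat; lra).
  destruct (geom A k f m) as [Hinside Hdis].
  - intros j Hj. split; [apply pos_INR|]. unfold aR, av.
    assert (INR (nth (f j) A 0%nat) <= Mr) by (apply le_INR; apply nth_le_max; auto).
    rewrite Hu. nra.
  - rewrite Hu. nra.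
  - rewrite Hu. unfold Nsize. fold Mr. replace (INR k ^ 4) with (INR k * INR k ^ 3) by ring. nra.
  - unfold uu. field. lra.
  - lia.
  - unfold L1, L2, aR. rewrite !(rsf_INR _ (av A f)). unfold av. rewrite Hsum. reflexivity.
  - exists (map (place A k f m) (slots k)). split.
    + split; [|split].
      * intros p Hp. apply in_map_iff in Hp as [s [<- Hs]].
        apply in_slots in Hs. rewrite item_place. simpl. split; [auto|split].
        -- intros _. unfold place. destruct (Nat.ltb (fst s) m), (snd s); reflexivity.
        -- apply Hinside; auto.
      * unfold slots. rewrite map_item. apply nodup_fm. apply seq_NoDup.
        intros i j Hi Hj. apply in_seq in Hi, Hj. apply Hinj; lia.
      * intros i j Hi Hj Hij. rewrite length_map in Hi, Hj.
        rewrite (nth_indep _ _ (place A k f m (0%nat,false))) by (rewrite length_map; auto).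
        rewrite (nth_indep _ dummy_pl (place A k f m (0%nat,false))) by (rewrite length_map; auto).
        rewrite !map_nth. apply Hdis.
        -- apply in_slots. apply nth_In. auto.
        -- apply in_slots. apply nth_In. auto.
        -- intros E. apply Hij. eapply NoDup_nth; eauto.
           unfold slots. apply (NoDup_map_inv (fun s : nat * bool => s)). rewrite map_id.
           assert (H := nodup_fm (fun j => j) (seq 0 k) (seq_NoDup _ _) ltac:(auto)).
           simpl in H. exact H.
    + unfold slots. rewrite map_item. apply Permutation_refl.
Qed.

Theorem mainTheorem9 (k : nat) (A : list nat) :
  Nat.Odd k -> (9 <= k)%nat -> Forall (fun a => (0 < a)%nat) A ->
  (forall (f : nat -> nat) (m : nat),
      (forall j, (j < k)%nat -> (f j < length A)%nat) ->
      (forall i j, (i < k)%nat -> (j < k)%nat -> f i = f j -> i = j) ->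
      (1 <= m <= k - 1)%nat ->
      (list_sum_nat (map (fun j => nth (f j) A 0) (seq 0 m)) =
       list_sum_nat (map (fun j => nth (f j) A 0) (seq m (k - m))))%nat ->
      exists P : list placement,
        feasible false A k P /\
        Permutation (map pl_item P)
          (flat_map (fun j => [(f j, false); (f j, true)]) (seq 0 k))) /\
  (forall P : list placement, feasible true A k P -> (length P <= 2 * k)%nat).
Proof.
  intros _ Hk HA. split.
  - apply part1; auto.
  - apply part2; auto.
Qed.
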